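(* Let $n=5$. The largest integer $k\ge 0$ for which there exists a distinct DNF tautology in the variables $x_1,\dots,x_5$ all of whose cubes have length exactly $k$ is $k=2$. In particular, there is no distinct DNF tautology in $x_1,\dots,x_5$ all of whose cubes have length exactly $3$.
   Context: A literal is a variable $x_i$ or its negation $\bar x_i$. A cube is a conjunction of literals, at most one literal per variable; its length is the number of distinct literals in it, and its support is the set of indices of the variables occurring in it. A DNF is a disjunction of cubes; it is a tautology if it evaluates to true under every assignment of truth values to the variables $x_1,\dots,x_n$. A DNF is called distinct if no two of its cubes have the same support. *)

(* Defs.v *)
From mathcomp Require Import all_boot.
Set Implicit Arguments. Unset Strict Implicit. Unset Printing Implicit Defensive.

(* A cube is a partial map: c i = None  -> variable i does not occur;
   c i = Some true -> literal x_i;  c i = Some false -> literal (not x_i).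
   This encodes "at most one literal per variable". *)
Definition cube (n : nat) := {ffun 'I_n -> option bool}.

Definition support n (c : cube n) : {set 'I_n} := [set i | c i != None].

Definition cube_length n (c : cube n) : nat := #|support c|.

Definition assignment (n : nat) := {ffun 'I_n -> bool}.

Definition cube_sat n (a : assignment n) (c : cube n) : bool :=
  [forall i, if c i is Some b then a i == b else true].

Definition dnf (n : nat) := seq (cube n).

Definition dnf_sat n (a : assignment n) (F : dnf n) : bool :=
  has (cube_sat a) F.

Definition tautology n (F : dnf n) : Prop := forall a : assignment n, dnf_sat a F.

Definition distinct_dnf n (F : dnf n) : bool := uniq (map (@support n) F).

Definition all_length n (k : nat) (F : dnf n) : bool :=
  all (fun c => cube_length c == k) F.

Definition good_dnf n (k : nat) (F : dnf n) : Prop :=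
  [/\ distinct_dnf F, all_length k F & tautology F].

(* Main.v *)
Require Import Defs.
From mathcomp Require Import all_boot.
Set Implicit Arguments. Unset Strict Implicit. Unset Printing Implicit Defensive.

Section Search.
Variables (C : eqType) (Pt : Type) (sat : C -> Pt -> bool).

Definition br (rec : seq (seq C) -> seq Pt -> bool) (y : Pt) (unc : seq Pt) :=
  fix br (pre post : seq (seq C)) {struct post} : bool :=
  match post with
  | [::] => true
  | os :: post' =>
      all (fun c => if sat c y then
             rec (map (filter (fun d => ~~ sat d y)) pre ++ post')
                 (filter (fun z => ~~ sat c z) unc) else true) os
      && br (rcons pre os) post'
  end.

Fixpoint search (n : nat) (R : seq (seq C)) (unc : seq Pt) : bool :=
  match unc, n with
  | [::], _ => false
  | _, 0 => false
  | y :: _, n'.+1 => br (search n') y unc [::] R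
  end.

Definition covers (sel : seq C) (unc : seq Pt) :=
  all (fun y => has (fun c => sat c y) sel) unc.

Lemma all2_cat_mem (s1 s2 : seq C) (r1 r2 : seq (seq C)) :
  all2 (fun c os => c \in os) s1 r1 -> all2 (fun c os => c \in os) s2 r2 ->
  all2 (fun c os => c \in os) (s1 ++ s2) (r1 ++ r2).
Proof. by elim: s1 r1 => [|c s IH] [|o r] //= /andP[-> /IH H] /H. Qed.

Lemma all2_filt_mem y (s : seq C) (r : seq (seq C)) :
  all2 (fun c os => c \in os) s r -> ~~ has (fun c => sat c y) s ->
  all2 (fun c os => c \in os) s (map (filter (fun d => ~~ sat d y)) r).
Proof.
elim: s r => [|c s IH] [|o r] //= /andP[Hc Hr]; rewrite negb_or => /andP[Hcy Hn].
by rewrite mem_filter Hcy Hc /= IH.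
Qed.

Lemma search_sound n R unc sel :
  search n R unc -> all2 (fun c os => c \in os) sel R -> ~~ covers sel unc.
Proof.
elim: n R unc sel => [|n IH] R [|y unc] sel //=.
move=> Hbr Hsel; apply/negP => Hcov.
have main : forall post pre selpre selpost,
  br (search n) y (y :: unc) pre post ->
  all2 (fun c os => c \in os) selpre pre ->
  all2 (fun c os => c \in os) selpost post ->
  ~~ has (fun c => sat c y) selpre ->
  covers (selpre ++ selpost) (y :: unc) -> False.
  elim=> [|os post IHp] pre selpre [|c selpost] //=.
  - move=> _ _ _ Hn; rewrite /covers cats0 /= => /andP[Hy _]; move: Hn; rewrite Hy //.
  - move=> /andP[Hall Hbr'] Hpre /andP[Hc Hpost] Hn; rewrite /covers => Hcv.
    case Hcy: (sat c y).
    + have := allP Hall c Hc; rewrite Hcy /= => Hs.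
      have := IH _ _ (selpre ++ selpost) Hs.
      rewrite all2_cat_mem ?all2_filt_mem //.
      move=> /(_ isT) /negP; apply; rewrite /covers all_filter.
      move: Hcv => /andP[_]; apply: sub_all => z.
      rewrite !has_cat /= => /or3P [H|H|H]; apply/implyP => Hn2; rewrite has_cat ?H ?orbT //.
      by rewrite H in Hn2.
    + apply: (IHp (rcons pre os) (rcons selpre c) selpost Hbr').
      * by rewrite -!cats1 all2_cat_mem //= Hc.
      * exact: Hpost.
      * by rewrite -cats1 has_cat negb_or Hn /= Hcy.
      * by rewrite cat_rcons.
by apply: (main R [::] [::] sel Hbr isT Hsel isT).
Qed.
End Search.

Definition fsat (c : seq (nat * bool)) (y : seq bool) := all (fun p => nth false y p.1 == p.2) c.
Definition trans (c : cube 5) : seq (nat*bool) :=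
  [seq (val i, odflt false (c i)) | i <- [seq i <- enum 'I_5 | c i != None]].
Definition keyf (c : cube 5) : seq nat := unzip1 (trans c).

Fixpoint allbits n : seq (seq bool) :=
  if n is n'.+1 then [seq b :: l | b <- [:: false; true], l <- allbits n'] else [:: [::]].
Fixpoint subseqs (l : seq nat) : seq (seq nat) :=
  if l is x :: l' then [seq x :: s | s <- subseqs l'] ++ subseqs l' else [:: [::]].
Definition subs k := [seq S <- subseqs (iota 0 5) | size S == k].
Definition entry k (S : seq nat) := [seq zip S bs | bs <- allbits k].
Definition R0 k := map (entry k) (subs k).

Lemma mem_allbits l : l \in allbits (size l).
Proof.
elim: l => [|b l IH] //=.
by rewrite !mem_cat; case: b; rewrite (map_f _ IH) ?orbT.
Qed.

Lemma nil_subseqs l : [::] \in subseqs l.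
Proof. by elim: l => [|x l IH] //=; rewrite mem_cat IH orbT. Qed.

Lemma mem_subseqs l s : subseq s l -> s \in subseqs l.
Proof.
elim: l s => [|x l IH] [|y s] //=; first by rewrite mem_cat nil_subseqs orbT.
move=> H.
rewrite mem_cat; case: (eqVneq y x) H => [-> H|_ H].
  by rewrite (map_f (cons x) (IH _ H)).
by rewrite (IH (y :: s)) ?orbT.
Qed.

Lemma size_trans c : size (trans c) = #|Defs.support c|.
Proof.
have U : uniq [seq i <- enum 'I_5 | c i != None] by rewrite filter_uniq ?enum_uniq.
rewrite size_map -(card_uniqP U); apply: eq_card => i.
by rewrite mem_filter mem_enum /Defs.support !inE andbT.
Qed.

Lemma mem_keyf c (i : 'I_5) : (val i \in keyf c) = (c i != None).
Proof.
rewrite /keyf /trans /unzip1 -map_comp (mem_map val_inj) mem_filter mem_enum.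
by rewrite andbT.
Qed.

Lemma keyf_subs k c : #|Defs.support c| = k -> keyf c \in subs k.
Proof.
move=> Hk; rewrite mem_filter /keyf size_map size_trans Hk eqxx andTb.
apply: mem_subseqs; rewrite /unzip1 /trans -map_comp -val_enum_ord.
by apply: map_subseq; apply: filter_subseq.
Qed.

Lemma fsat_trans (y : seq bool) c :
  cube_sat [ffun i : 'I_5 => nth false y i] c -> fsat (trans c) y.
Proof.
move=> /forallP H; rewrite /fsat /trans all_map; apply/allP => i.
rewrite mem_filter => /andP[Hi _] /=; move: (H i) Hi; rewrite ffunE.
by case: (c i).
Qed.

Lemma uniq_map_inj (T T' : eqType) (f : T -> T') s x x' :
  uniq (map f s) -> x \in s -> x' \in s -> f x = f x' -> x = x'.
Proof.
elim: s => [|z s IH] //= /andP[Hz Hu]; rewrite !inE.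
case/orP=> [/eqP->|Hx]; case/orP=> [/eqP->|Hx'] // E.
- by move: Hz; rewrite E (map_f f Hx').
- by move: Hz; rewrite -E (map_f f Hx).
- exact: IH.
Qed.

Lemma keyf_support c c' : keyf c = keyf c' -> Defs.support c = Defs.support c'.
Proof.
by move=> E; apply/setP => i; rewrite /Defs.support !inE -!mem_keyf E.
Qed.

Definition selfor k (F : dnf 5) (S : seq nat) :=
  if [seq c <- F | keyf c == S] is c :: _ then trans c else zip S (nseq k false).

Lemma selfor_entry k F S : S \in subs k -> selfor k F S \in entry k S.
Proof.
rewrite mem_filter => /andP[/eqP HS _]; rewrite /selfor.
case E: [seq c <- F | keyf c == S] => [|c l].
  by apply: map_f; have := mem_allbits (nseq k false); rewrite size_nseq.
have : c \in [seq c <- F | keyf c == S] by rewrite E inE eqxx.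
rewrite mem_filter => /andP[/eqP Hc _].
rewrite -[trans c]zip_unzip; rewrite -/(keyf c) Hc; apply: map_f.
have := mem_allbits (unzip2 (trans c)).
by rewrite /unzip2 size_map -HS -Hc /keyf /unzip1 size_map.
Qed.

Lemma not_good k (F : dnf 5) : good_dnf k F -> ~~ search fsat 11 (R0 k) (allbits 5).
Proof.
case=> Hd Hl Ht; apply/negP => Hs.
have := search_sound Hs (sel := map (selfor k F) (subs k)).
have -> : all2 (fun c os => c \in os) (map (selfor k F) (subs k)) (R0 k).
  rewrite /R0; have : forall S, S \in subs k -> S \in subs k by [].
  elim: {-2}(subs k) => [|S l IH] //= H.
  by rewrite selfor_entry ?H ?mem_head // IH // => S' HS'; rewrite H // inE HS' orbT.
move=> /(_ isT) /negP; apply; apply/allP => y _.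
have := Ht [ffun i : 'I_5 => nth false y i]; rewrite /dnf_sat => /hasP[c Hc Hsat].
have Hk : #|Defs.support c| = k by apply/eqP; exact: (allP Hl c Hc).
apply/hasP; exists (selfor k F (keyf c)); first by apply: map_f; apply: keyf_subs.
rewrite /selfor; case E: [seq c' <- F | keyf c' == keyf c] => [|c' l].
  have : c \in [seq c' <- F | keyf c' == keyf c] by rewrite mem_filter eqxx Hc.
  by rewrite E.
have : c' \in [seq c' <- F | keyf c' == keyf c] by rewrite E inE eqxx.
rewrite mem_filter => /andP[/eqP Hc' Hc'F].
have -> : c' = c by apply: (uniq_map_inj Hd Hc'F Hc); apply: keyf_support.
exact: fsat_trans.
Qed.




Lemma s3 : search fsat 11 (R0 3) (allbits 5). Proof. vm_compute. reflexivity. Qed.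
Lemma s4 : search fsat 11 (R0 4) (allbits 5). Proof. vm_compute. reflexivity. Qed.
Lemma s5 : search fsat 11 (R0 5) (allbits 5). Proof. vm_compute. reflexivity. Qed.

Definition mk2 (i j : nat) (bi bj : bool) : cube 5 :=
  [ffun k : 'I_5 => if val k == i then Some bi else if val k == j then Some bj else None].

Definition F2 : dnf 5 :=
  [:: mk2 0 1 false false; mk2 0 2 false false; mk2 0 3 false false;
      mk2 0 4 false false; mk2 1 2 false false; mk2 1 3 false false;
      mk2 1 4 true false; mk2 2 3 true true; mk2 2 4 false true;
      mk2 3 4 false true].

Lemma val_inord i : i < 5 -> \val (inord i : 'I_5) = i.
Proof. exact: inordK. Qed.

Lemma eq_inord (k : 'I_5) i : i < 5 -> (k == inord i) = (val k == i).
Proof. by move=> Hi; rewrite -(inj_eq val_inj) /= inordK. Qed.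

Lemma mem_supp2 i j bi bj (k : 'I_5) :
  (k \in Defs.support (mk2 i j bi bj)) = (val k == i) || (val k == j).
Proof. by rewrite /Defs.support inE ffunE; case: (val k == i); case: (val k == j). Qed.

Lemma len2 i j bi bj : i < 5 -> j < 5 -> i != j -> cube_length (mk2 i j bi bj) = 2.
Proof.
move=> Hi Hj Hij; rewrite /cube_length.
have -> : Defs.support (mk2 i j bi bj) = [set inord i; inord j].
  by apply/setP => k; rewrite mem_supp2 !inE !eq_inord.
by rewrite cards2 -(inj_eq val_inj) /= !inordK // Hij.
Qed.

Lemma sat2 (a : assignment 5) i j bi bj : i < 5 -> j < 5 -> i != j ->
  cube_sat a (mk2 i j bi bj) = (a (inord i) == bi) && (a (inord j) == bj).
Proof.
move=> Hi Hj Hij; apply/forallP/andP.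
  move=> H; split.
    by have := H (inord i); rewrite ffunE val_inord // eqxx.
  by have := H (inord j); rewrite ffunE val_inord // eq_sym (negbTE Hij) eqxx.
case=> H1 H2 k; rewrite ffunE.
case: eqP => [Hk|_]; first by rewrite -Hk inord_val in H1.
by case: eqP => [Hk|_] //; rewrite -Hk inord_val in H2.
Qed.

Definition hset (A : {set 'I_5}) : seq bool := [seq k \in A | k <- enum 'I_5].

Lemma hset2 i j bi bj :
  hset (Defs.support (mk2 i j bi bj)) = [seq (m == i) || (m == j) | m <- iota 0 5].
Proof.
rewrite /hset -val_enum_ord -[RHS]map_comp enumT.
by apply: eq_map => k /=; rewrite mem_supp2.
Qed.

Lemma F2_good : good_dnf 2 F2.
Proof.
split.
- rewrite /distinct_dnf; apply: (@map_uniq _ _ hset); rewrite -map_comp /=.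
  by rewrite !hset2.
- by rewrite /all_length /= !len2.
- move=> a; rewrite /dnf_sat /= !sat2 //.
  by case: (a (inord 0)); case: (a (inord 1)); case: (a (inord 2));
     case: (a (inord 3)); case: (a (inord 4)).
Qed.

Theorem mainTheorem1 :
  (exists F : dnf 5, good_dnf 2 F) /\
  (forall (k : nat) (F : dnf 5), good_dnf k F -> k <= 2).
Proof.
split; first by exists F2; exact: F2_good.
move=> k F HF; case: (leqP k 2) => // Hk.
have [H3|H3] := eqVneq k 3.
  by move: (not_good HF); rewrite H3 s3.
have [H4|H4] := eqVneq k 4.
  by move: (not_good HF); rewrite H4 s4.
have [H5|H5] := eqVneq k 5.
  by move: (not_good HF); rewrite H5 s5.
have Hk6 : 5 < k by move: Hk H3 H4 H5; clear HF; case: k => [|[|[|[|[|[|k]]]]]].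
case: HF => _ Hl Ht.
have := Ht [ffun=> false]; rewrite /dnf_sat => /hasP[c Hc _].
have := allP Hl c Hc; rewrite /cube_length => /eqP Hcard.
have := max_card (mem (Defs.support c)); rewrite card_ord Hcard.
by rewrite leqNgt Hk6.
Qed.
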